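(* Let $n\ge2$, $A\in\mathbb{R}^{n\times n}$ symmetric with eigenvalues $\lambda_1\ge\dots\ge\lambda_n$, $\rho=\lambda_1-\lambda_n$, and suppose $\delta:=\lambda_{n-1}-\lambda_n>0$. Let $\gamma>0$ and $0<\beta\le\big[2(\frac73+\gamma)+(\frac23+\gamma)\frac{\rho}{\delta}\big]^{-1}\delta$. Then $f(\mathbf{z})=\frac12\mathbf{z}^TA\mathbf{z}+\frac{\beta}{2}\sum_kz_k^4$ on $\mathbb{S}^{n-1}$ is $(\gamma\beta,\gamma\beta,\gamma\beta)$-strict-saddle.
   Context: $\mathbb{S}^{n-1}$ is the unit sphere in $\mathbb{R}^n$, $\mathcal{T}_{\mathbf{z}}=\{\mathbf{v}:\mathbf{v}^T\mathbf{z}=0\}$. For $\mathbf{z}\in\mathbb{S}^{n-1}$ let $2\lambda=\mathbf{z}^TA\mathbf{z}+2\beta\|\mathbf{z}\|_4^4$, $\mathrm{grad} f(\mathbf{z})=[A+2\beta\,\mathrm{diag}(z_1^2,\dots,z_n^2)]\mathbf{z}-2\lambda\mathbf{z}$, and $H_f(\mathbf{z})[\mathbf{v}]=\mathbf{v}^T[A+6\beta\,\mathrm{diag}(z_1^2,\dots,z_n^2)-2\lambda I]\mathbf{v}$. For $\xi,\epsilon,\zeta>0$, $f$ is $(\xi,\epsilon,\zeta)$-strict-saddle if for every $\mathbf{z}\in\mathbb{S}^{n-1}$ at least one holds: (1) $H_f(\mathbf{z})[\mathbf{v}]\ge\xi$ for all $\mathbf{v}\in\mathcal{T}_{\mathbf{z}}\cap\mathbb{S}^{n-1}$;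 (2) $\|\mathrm{grad} f(\mathbf{z})\|\ge\epsilon$; (3) there is $\mathbf{v}\in\mathcal{T}_{\mathbf{z}}\cap\mathbb{S}^{n-1}$ with $H_f(\mathbf{z})[\mathbf{v}]\le-\zeta$. *)

(* Defs.v *)
From HB Require Import structures.
From mathcomp Require Import all_boot all_order all_algebra.
From mathcomp Require Import reals.
Set Implicit Arguments. Unset Strict Implicit. Unset Printing Implicit Defensive.
Import Order.TTheory GRing.Theory Num.Theory.
Local Open Scope ring_scope.

Section StrictSaddle.
Variables (R : realType) (n : nat).

Definition vnorm (v : 'cV[R]_n) : R := Num.sqrt (\sum_i v i 0 ^+ 2).

Definition on_sphere (z : 'cV[R]_n) : Prop := vnorm z = 1.

Definition tangent (z v : 'cV[R]_n) : Prop := (v^T *m z) 0 0 = 0.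

Definition Dsq (z : 'cV[R]_n) : 'M[R]_n := diag_mx (\row_i (z i 0 ^+ 2)).

Definition fobj (A : 'M[R]_n) (beta : R) (z : 'cV[R]_n) : R :=
  (z^T *m A *m z) 0 0 / 2 + beta / 2 * \sum_k z k 0 ^+ 4.

Definition two_lambda (A : 'M[R]_n) (beta : R) (z : 'cV[R]_n) : R :=
  (z^T *m A *m z) 0 0 + 2 * beta * \sum_k z k 0 ^+ 4.

Definition rgrad (A : 'M[R]_n) (beta : R) (z : 'cV[R]_n) : 'cV[R]_n :=
  (A + (2 * beta) *: Dsq z) *m z - two_lambda A beta z *: z.

Definition rhess (A : 'M[R]_n) (beta : R) (z v : 'cV[R]_n) : R :=
  (v^T *m (A + (6 * beta) *: Dsq z - (two_lambda A beta z)%:M) *m v) 0 0.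

Definition strict_saddle (A : 'M[R]_n) (beta xi eps zeta : R) : Prop :=
  forall z : 'cV[R]_n, on_sphere z ->
    (forall v, tangent z v -> on_sphere v -> xi <= rhess A beta z v)
    \/ eps <= vnorm (rgrad A beta z)
    \/ (exists v, tangent z v /\ on_sphere v /\ rhess A beta z v <= - zeta).

End StrictSaddle.

(* Main.v *)
Require Import Defs.
From HB Require Import structures.
From mathcomp Require Import all_boot all_order all_algebra.
From mathcomp Require Import reals.
From mathcomp Require Import complex zify ring lra.
Import Order.TTheory GRing.Theory Num.Theory.
Local Open Scope ring_scope.

Set Implicit Arguments. Unset Strict Implicit. Unset Printing Implicit Defensive.

Lemma char_poly_sim (F : fieldType) n (P B : 'M[F]_n) : P \in unitmx ->
  char_poly (invmx P *m B *m P) = char_poly B.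
Proof.
move=> Pu; rewrite /char_poly /char_poly_mx.
set f := polyC.
have eX : ('X%:M : 'M[{poly F}]_n) = map_mx f (invmx P) *m 'X%:M *m map_mx f P.
  by rewrite scalar_mxC -mulmxA -map_mxM mulVmx // map_mx1 mulmx1.
rewrite {1}eX !map_mxM -mulmxBl -mulmxBr !det_mulmx mulrC mulrA -det_mulmx.
by rewrite -map_mxM mulmxV // map_mx1 det1 mul1r.
Qed.

Definition dot (R : realType) n (x y : 'cV[R]_n) : R := \sum_i x i 0 * y i 0.
Arguments dot {R n}.

Section Cplx.
Local Open Scope sesquilinear_scope.
Variables (R : realType) (n : nat) (A : 'M[R]_n) (lam : nat -> R).
Hypothesis Asym : A^T = A.
Hypothesis Achar : char_poly A = \prod_(i < n) ('X - (lam i)%:P).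

Let f := real_complex R.
Let Ac := map_mx f A.

Lemma conj_real_c (x : R) : Num.conj (x%:C)%C = (x%:C)%C.
Proof. by apply/CrealP; rewrite complex_real. Qed.

Lemma Ac_herm : Ac ^t* = Ac.
Proof.
apply/matrixP=> i j; rewrite !mxE conj_real_c.
by have := congr1 (fun M : 'M[R]_n => M i j) Asym; rewrite mxE => ->.
Qed.

Lemma spec_complex : exists (d : 'I_n -> R) (P : 'M[R[i]]_n),
    perm_eq [seq d i | i <- index_enum 'I_n] [seq lam (nat_of_ord j) | j <- index_enum 'I_n] /\
    P *m P^t* = 1%:M /\ Ac = P^t* *m diag_mx (\row_i (d i)%:C%C) *m P.
Proof.
have Nc : Ac \is normalmx by apply/normalmxP; rewrite Ac_herm.
move/orthomx_spectralP: (Nc).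
set P := spectralmx Ac; set dC := spectral_diag Ac => E.
have PU : P \is unitarymx by exact: spectral_unitarymx.
have Pu : P \in unitmx by exact: spectral_unit.
have hc : char_poly Ac = \prod_(i < n) ('X - (dC 0 i)%:P).
  rewrite E char_poly_sim // char_poly_trig ?diag_mx_is_trig //.
  by apply: eq_bigr => i _; rewrite mxE eqxx mulr1n.
have hc2 : char_poly Ac = \prod_(i < n) ('X - (f (lam i))%:P).
  by rewrite -map_char_poly Achar map_prod_XsubC.
have pe : perm_eq [seq dC 0 i | i <- index_enum 'I_n] [seq f (lam (nat_of_ord j)) | j <- index_enum 'I_n].
  by apply: prod_XsubC_eq; rewrite !big_map -hc -hc2.
have dreal : forall i, dC 0 i = f (complex.Re (dC 0 i)).
  move=> i; have : dC 0 i \in [seq f (lam (nat_of_ord j)) | j <- index_enum 'I_n].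
    by rewrite -(perm_mem pe); apply: map_f; rewrite mem_index_enum.
  by case/mapP => j _ ->.
exists (fun i => complex.Re (dC 0 i)), P; split.
  apply: (perm_map_inj (@complexI R)).
  rewrite -!map_comp.
  have -> : [seq (f \o (fun i => complex.Re (dC 0 i))) i | i <- index_enum 'I_n] = [seq dC 0 i | i <- index_enum 'I_n].
    by apply: eq_map => i /=; rewrite -dreal.
  exact: pe.
split; first exact/unitarymxP.
rewrite {1}E invmx_unitary //; congr (_ *m _ *m _).
by apply/matrixP => i j; rewrite !mxE {1}(dreal i).
Qed.

Lemma conj_mul_self (z : R[i]) : Num.conj z * z = ((complex.Re z)^+2 + (complex.Im z)^+2)%:C%C.
Proof. by case: z => a b; simpc; congr (_ +i* _)%C; rewrite ?expr2 // mulrC subrr. Qed.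
Lemma Re_mulr (z : R[i]) (b : R) : complex.Re (z * (b%:C)%C) = complex.Re z * b.
Proof. by case: z => a c; simpc. Qed.
Lemma Im_mulr (z : R[i]) (b : R) : complex.Im (z * (b%:C)%C) = complex.Im z * b.
Proof. by case: z => a c; simpc. Qed.

Lemma conj_tr_real (x : 'cV[R]_n) : (map_mx f x)^t* = (map_mx f x)^T.
Proof. by apply/matrixP => i j; rewrite !mxE conj_real_c. Qed.

Lemma quad_id (B : 'M[R]_n) (P : 'M[R[i]]_n) (d : 'I_n -> R) (x : 'cV[R]_n) :
  map_mx f B = P^t* *m diag_mx (\row_i (d i)%:C%C) *m P ->
  let y := P *m map_mx f x in
  dot (B *m x) x = \sum_i d i * ((complex.Re (y i 0))^+2 + (complex.Im (y i 0))^+2).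
Proof.
move=> hA y; apply: (@complexI R).
have -> : dot (B *m x) x = (x^T *m (B *m x)) 0 0.
  by rewrite /dot mxE; apply: eq_bigr => i _; rewrite !mxE mulrC.
rewrite rmorph_sum /=.
have -> : ((x^T *m (B *m x)) 0 0)%:C%C = ((map_mx f x)^T *m (map_mx f B *m map_mx f x)) 0 0.
  by rewrite map_trmx -!map_mxM [RHS]mxE.
rewrite hA -!mulmxA mulmxA -conj_tr_real.
have -> : (map_mx f x)^t* *m P^t* = y^t*.
  by rewrite /y trmx_mul map_mxM.
rewrite mxE; apply: eq_bigr => i _.
by rewrite mul_diag_mx !mxE rmorphM /= -conj_mul_self mulrCA.
Qed.

Lemma cnt_card (p : pred 'I_n) : count p (index_enum 'I_n) = #|p|.
Proof. by rewrite -sum1_card -sum1_count. Qed.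

Lemma Re_sum (I : Type) (r : seq I) (F : I -> R[i]) :
  complex.Re (\sum_(i <- r) F i) = \sum_(i <- r) complex.Re (F i).
Proof. by apply: (big_morph _ (fun a b => _)) => //; case=> ? ? [] ? ?. Qed.
Lemma Im_sum (I : Type) (r : seq I) (F : I -> R[i]) :
  complex.Im (\sum_(i <- r) F i) = \sum_(i <- r) complex.Im (F i).
Proof. by apply: (big_morph _ (fun a b => _)) => //; case=> ? ? [] ? ?. Qed.


Lemma dot0l (x : 'cV[R]_n) : dot 0 x = 0.
Proof. by rewrite /dot big1 // => i _; rewrite mxE mul0r. Qed.

Lemma spec_final (n2 : (2 <= n)%N)
  (srt : forall i j : nat, (i <= j < n)%N -> lam j <= lam i)
  (gap : lam n.-1 < lam n.-2) :
  exists r1 r2 : 'cV[R]_n, dot r1 r1 + dot r2 r2 <= 1 /\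
   forall x, lam n.-1 * dot x x + (lam n.-2 - lam n.-1) *
       (dot x x - (dot r1 x)^+2 - (dot r2 x)^+2) <= dot (A *m x) x.
Proof.
have [d [P [pe [PU hA]]]] := spec_complex.
set L := lam n.-1.
have dlam : forall i, exists j : 'I_n, d i = lam j.
  move=> i; have : d i \in [seq lam (nat_of_ord j) | j <- index_enum 'I_n].
    by rewrite -(perm_mem pe); apply: map_f; rewrite mem_index_enum.
  by case/mapP => j _ ->; exists j.
have lamL : forall j : 'I_n, lam j = L -> (j : nat) = n.-1.
  move=> j hj; case: (ltnP j n.-1) => hlt.
    have := srt j n.-2; rewrite hj => h.
    have : lam n.-2 <= L by apply: h; have := ltn_ord j; lia.
    by rewrite leNgt gap.
  by have := ltn_ord j; lia.
have dgt : forall i, d i != L -> lam n.-2 <= d i.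
  move=> i; case: (dlam i) => j -> hne.
  have hj : (j : nat) != n.-1 by apply: contra hne => /eqP hj; rewrite /L -hj.
  by apply: srt; have := ltn_ord j; lia.
have duniq : forall i0 i1, d i0 = L -> d i1 = L -> i0 = i1.
  have c1 : (count (pred1 L) [seq lam (nat_of_ord j) | j <- index_enum 'I_n] <= 1)%N.
    rewrite count_map cnt_card; apply/card_le1_eqP => j1 j2.
    rewrite !inE /= => /eqP h1 /eqP h2; apply: val_inj.
    by rewrite /= (lamL _ h1) (lamL _ h2).
  move=> i0 i1 h0 h1; apply/eqP/negPn/negP => hne.
  have : (1 < count (pred1 L) [seq d i | i <- index_enum 'I_n])%N.
    rewrite count_map cnt_card; apply/card_gt1P; exists i0, i1.
    by rewrite !inE /= h0 h1 eqxx.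
  by rewrite (permP pe) => /leq_trans/(_ c1); rewrite ltnn.
have P1 : P^t* *m P = 1%:M by apply: mulmx1C.
have h1 : map_mx f 1%:M = P^t* *m diag_mx (\row_i (1%:C)%C) *m P.
  have -> : (\row_i (1%:C)%C : 'rV[R[i]]_n) = const_mx 1.
    by apply/matrixP => i j; rewrite !mxE.
  by rewrite diag_const_mx mulmx1 P1; apply/matrixP => i j; rewrite !mxE; case: (i == j).
have key : forall x : 'cV[R]_n, forall i0, d i0 = L ->
  let y := P *m map_mx f x in
  lam n.-1 * dot x x + (lam n.-2 - lam n.-1) *
       (dot x x - ((complex.Re (y i0 0))^+2 + (complex.Im (y i0 0))^+2)) <= dot (A *m x) x.
  move=> x i0 hi0 /=; set y := P *m map_mx f x.
  have := @quad_id A P d x hA; rewrite -/y => ->.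
  have := @quad_id 1%:M P (fun _ => 1) x h1; rewrite -/y mul1mx => ->.
  pose N i := complex.Re (y i 0) ^+ 2 + complex.Im (y i 0) ^+ 2.
  have N0 : forall i, 0 <= N i by move=> i; rewrite /N addr_ge0 // sqr_ge0.
  have -> : \sum_i 1 * (complex.Re (y i 0) ^+ 2 + complex.Im (y i 0) ^+ 2) = \sum_i N i.
    by apply: eq_bigr => i _; rewrite mul1r.
  have -> : \sum_i d i * (complex.Re (y i 0) ^+ 2 + complex.Im (y i 0) ^+ 2) = \sum_i d i * N i.
    by [].
  rewrite (bigD1 i0) //= [X in _ <= X](bigD1 i0) //= -/(N i0) hi0.
  have : lam n.-2 * \sum_(i | i != i0) N i <= \sum_(i | i != i0) d i * N i.
    rewrite mulr_sumr; apply: ler_sum => i hi; apply: ler_wpM2r => //.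
    apply: dgt; apply/eqP => e; move: hi; by rewrite (duniq _ _ hi0 e) eqxx.
  rewrite /L; have := N0 i0; lra.
case: (pickP (fun i => d i == L)) => [i0 /eqP hi0 | hnone].
  exists (\col_k complex.Re (P i0 k)), (\col_k complex.Im (P i0 k)); split.
    have e := congr1 (fun M : 'M[R[i]]_n => M i0 i0) PU.
    rewrite /= !mxE eqxx mulr1n in e.
    have e2 : \sum_k ((complex.Re (P i0 k))^+2 + (complex.Im (P i0 k))^+2) = 1.
      apply: (@complexI R); rewrite rmorph_sum rmorph1 -e; apply: eq_bigr => k _.
      by rewrite !mxE mulrC; symmetry; exact: conj_mul_self.
    rewrite -e2 /dot -big_split /=; rewrite le_eqVlt; apply/orP; left; apply/eqP; apply: eq_bigr => k _.
    by rewrite !mxE !expr2.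
  move=> x; have := key x i0 hi0 => /=.
  have eRe : complex.Re ((P *m map_mx f x) i0 0) = dot (\col_k complex.Re (P i0 k)) x.
    by rewrite mxE Re_sum /dot; apply: eq_bigr => k _; rewrite !mxE /f Re_mulr.
  have eIm : complex.Im ((P *m map_mx f x) i0 0) = dot (\col_k complex.Im (P i0 k)) x.
    by rewrite mxE Im_sum /dot; apply: eq_bigr => k _; rewrite !mxE /f Im_mulr.
  by rewrite eRe eIm /L opprD addrA.
exists 0, 0; split; first by rewrite !dot0l addr0 ler01.
move=> x; rewrite !dot0l expr0n /= !subr0.
have := @quad_id A P d x hA => ->.
have := @quad_id 1%:M P (fun _ => 1) x h1; rewrite mul1mx => ->.
rewrite -mulrDl addrC subrK mulr_sumr; apply: ler_sum => i _; rewrite mul1r.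
apply: ler_wpM2r; first by rewrite addr_ge0 // sqr_ge0.
by apply: dgt; rewrite hnone.
Qed.

End Cplx.


Lemma final_alg (R : realType) (E s2 d b g : R) :
  0 <= s2 -> d * s2 <= E -> (2 * s2 - 1) * E <= (3 + g) * b * s2 ->
  (1 - s2) * E ^+ 2 <= (1 + g) ^+ 2 * b ^+ 2 * s2 ->
  (16 / 3 + 3 * g) * b <= d -> 0 < b -> 0 < g ->
  g * b <= d * (1 - s2) - E - 2 * b.
Proof.
move=> s0 hE hH hG hD b0 g0.
have d0 : 0 < d by nra.
case: (leP E 0) => E0.
  have s20 : s2 = 0 by nra.
  rewrite s20; nra.
have k0 : 0 <= (3 + g) * b by nra.
have h1 : (2 * s2 - 1) * d <= (3 + g) * b.
  have hA : (2 * s2 - 1) * E * d <= (3 + g) * b * s2 * d by rewrite ler_pM2r.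
  have hB : (3 + g) * b * (d * s2) <= (3 + g) * b * E by apply: ler_wpM2l.
  rewrite -(@ler_pM2r _ E) //; nra.
have k1 : 0 <= (1 + g) ^+ 2 * b ^+ 2 by nra.
have h2 : (1 - s2) * E * d <= (1 + g) ^+ 2 * b ^+ 2.
  have hA : (1 - s2) * E ^+ 2 * d <= (1 + g) ^+ 2 * b ^+ 2 * s2 * d by rewrite ler_pM2r.
  have hB : (1 + g) ^+ 2 * b ^+ 2 * (d * s2) <= (1 + g) ^+ 2 * b ^+ 2 * E by apply: ler_wpM2l.
  rewrite -(@ler_pM2r _ E) //; nra.
have h3 : E * (d - (3 + g) * b) <= 2 * (1 + g) ^+ 2 * b ^+ 2.
  have e1 : d - (3 + g) * b <= 2 * ((1 - s2) * d) by lra.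
  have := ler_wpM2l (ltW E0) e1; lra.
have h4 : 4 * (1 + g) ^+ 2 * b ^+ 2 <= (d - (3 + g) * b) * (d - (2 + g) * b).
  have hx : (7 / 3 + 2 * g) * b <= d - (3 + g) * b by lra.
  have hy : (10 / 3 + 2 * g) * b <= d - (2 + g) * b by lra.
  have p1 : 0 <= (7 / 3 + 2 * g) * b by nra.
  have p2 : 0 <= (10 / 3 + 2 * g) * b by nra.
  have := ler_pM p1 p2 hx hy.
  have : 4 * (1 + g) ^+ 2 * b ^+ 2 <= (7 / 3 + 2 * g) * b * ((10 / 3 + 2 * g) * b).
    have e : (7 / 3 + 2 * g) * b * ((10 / 3 + 2 * g) * b) - 4 * (1 + g) ^+ 2 * b ^+ 2
      = (34 / 9 + 10 / 3 * g) * b ^+ 2 by field.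
    rewrite -subr_ge0 e; nra.
  lra.
have p : 0 < d - (3 + g) * b by nra.
have h5 : 2 * E <= d - (2 + g) * b.
  rewrite -(@ler_pM2r _ (d - (3 + g) * b)) //; nra.
nra.
Qed.

Section Real.
Variables (R : realType) (n : nat).
Implicit Types x y w : 'cV[R]_n.

Lemma dotC x y : dot x y = dot y x.
Proof. by apply: eq_bigr => i _; rewrite mulrC. Qed.
Lemma dotDl x y w : dot (x + y) w = dot x w + dot y w.
Proof. by rewrite /dot -big_split; apply: eq_bigr => i _; rewrite mxE mulrDl. Qed.
Lemma dotBl x y w : dot (x - y) w = dot x w - dot y w.
Proof. by rewrite /dot -sumrB; apply: eq_bigr => i _; rewrite !mxE mulrBl. Qed.
Lemma dotZl a x y : dot (a *: x) y = a * dot x y.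
Proof. by rewrite /dot mulr_sumr; apply: eq_bigr => i _; rewrite mxE mulrA. Qed.
Lemma dotDr x y w : dot w (x + y) = dot w x + dot w y.
Proof. by rewrite dotC dotDl !(dotC w). Qed.
Lemma dotBr x y w : dot w (x - y) = dot w x - dot w y.
Proof. by rewrite dotC dotBl !(dotC w). Qed.
Lemma dotZr a x y : dot y (a *: x) = a * dot y x.
Proof. by rewrite dotC dotZl dotC. Qed.
Lemma dot_mulmx (M : 'M[R]_n) x y : dot (M *m x) y = dot x (M^T *m y).
Proof.
rewrite /dot; under eq_bigr do rewrite mxE mulr_suml.
under [RHS]eq_bigr do rewrite mxE mulr_sumr.
rewrite exchange_big; apply: eq_bigr => i _; apply: eq_bigr => j _.
by rewrite mxE; ring.
Qed.
Lemma dot_ge0 x : 0 <= dot x x.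
Proof. by apply: sumr_ge0 => i _; rewrite -expr2 sqr_ge0. Qed.
Lemma dot_eq0 x : dot x x = 0 -> x = 0.
Proof.
move=> /psumr_eq0P h; apply/matrixP => i j; rewrite ord1 mxE.
have /eqP := h (fun k _ => ltac:(by rewrite -expr2 sqr_ge0)) i isT.
by rewrite mulf_eq0 orbb => /eqP.
Qed.

Lemma CS x y : (dot x y) ^+ 2 <= dot x x * dot y y.
Proof.
have h := dot_ge0 (dot y y *: x - dot x y *: y).
rewrite !(dotBl, dotBr, dotZl, dotZr) (dotC y x) in h.
have hy := dot_ge0 y; have hx := dot_ge0 x.
case: (ltrP 0 (dot y y)) => hyy.
  have : 0 <= dot y y * (dot x x * dot y y - dot x y ^+ 2) by nra.
  by rewrite pmulr_rge0 // subr_ge0.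
have y0 : y = 0 by apply: dot_eq0; apply/le_anti; rewrite hyy hy.
have z0 : forall w, dot w (0 : 'cV[R]_n) = 0 by move=> w; rewrite /dot big1 // => i _; rewrite mxE mulr0.
by rewrite y0 !z0 expr0n mulr0.
Qed.

Lemma S2_from (A : 'M[R]_n) (Asym : A^T = A) (L K : R) (u r1 r2 : 'cV[R]_n) :
  L < K -> dot u u = 1 -> A *m u = L *: u -> dot r1 r1 + dot r2 r2 <= 1 ->
  (forall x, L * dot x x + (K - L) * (dot x x - dot r1 x ^+ 2 - dot r2 x ^+ 2) <= dot (A *m x) x) ->
  forall x, L * dot x x + (K - L) * (dot x x - dot u x ^+ 2) <= dot (A *m x) x.
Proof.
move=> LK uu Au r12 H x.
have mu1 : 1 <= dot r1 u ^+ 2 + dot r2 u ^+ 2.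
  have := H u; rewrite Au dotZl uu (dotC r1) (dotC r2) => h; nra.
have cs1 := CS r1 u; have cs2 := CS r2 u; rewrite uu mulr1 in cs1 cs2.
set w := x - dot u x *: u.
have uw : dot u w = 0 by rewrite dotBr dotZr uu mulr1 subrr.
have bes : forall r, dot r w ^+ 2 <= (dot r r - dot r u ^+ 2) * dot w w.
  move=> r; set r' := r - dot r u *: u.
  have e1 : dot r' w = dot r w by rewrite dotBl dotZl uw mulr0 subr0.
  have e2 : dot r' r' = dot r r - dot r u ^+ 2.
    rewrite /r' !(dotBl, dotBr, dotZl, dotZr) uu (dotC u r); ring.
  by rewrite -e1 -e2; apply: CS.
have b1 := bes r1; have b2 := bes r2; have ww := dot_ge0 w.
have z1 : dot r1 w = 0.
  apply/eqP; rewrite -sqrf_eq0 eq_le sqr_ge0 andbT.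
  have := sqr_ge0 (dot r2 w); nra.
have z2 : dot r2 w = 0.
  apply/eqP; rewrite -sqrf_eq0 eq_le sqr_ge0 andbT.
  have := sqr_ge0 (dot r1 w); nra.
have ex : forall r, dot r w = 0 -> dot r x = dot u x * dot r u.
  move=> r; rewrite /w dotBr dotZr => h; by rewrite -(subr0 (dot r x)) -h opprB addrCA subrr addr0 mulrC.
have hx := H x; rewrite (ex _ z1) (ex _ z2) in hx.
have : dot u x ^+ 2 * (dot r1 u ^+ 2 + dot r2 u ^+ 2) <= dot u x ^+ 2.
  rewrite -[X in _ <= X]mulr1; apply: ler_wpM2l; first exact: sqr_ge0.
  have := dot_ge0 r1; have := dot_ge0 r2; lra.
move=> h; have hKL : 0 <= K - L by lra.
have := ler_wpM2l hKL (_ : dot x x - dot u x ^+ 2 <= dot x x - (dot u x * dot r1 u) ^+ 2 - (dot u x * dot r2 u) ^+ 2).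
  move=> /(_ ltac:(rewrite !exprMn; lra)); lra.
Qed.
End Real.

Section Link.
Variables (R : realType) (n : nat).
Implicit Types x y z v : 'cV[R]_n.

Definition Wq z v := \sum_i z i 0 ^+ 2 * v i 0 ^+ 2.

Lemma vnorm_dot x : vnorm x = Num.sqrt (dot x x).
Proof. by rewrite /vnorm /dot; congr Num.sqrt; apply: eq_bigr => i _; rewrite expr2. Qed.

Lemma sphere_dot x : on_sphere x <-> dot x x = 1.
Proof.
rewrite /on_sphere vnorm_dot; split => [h|->]; last exact: sqrtr1.
by rewrite -(sqr_sqrtr (dot_ge0 x)) h expr1n.
Qed.

Lemma tangent_dot z v : tangent z v <-> dot v z = 0.
Proof.
rewrite /tangent mxE /dot.
by have -> : \sum_j v^T 0 j * z j 0 = \sum_i v i 0 * z i 0 by apply: eq_bigr => i _; rewrite mxE.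
Qed.

Lemma quad_mx (M : 'M[R]_n) v : (v^T *m M *m v) 0 0 = dot (M *m v) v.
Proof. by rewrite -mulmxA mxE /dot; apply: eq_bigr => i _; rewrite mxE mulrC. Qed.

Lemma Dsq_mul z v i : (Dsq z *m v) i 0 = z i 0 ^+ 2 * v i 0.
Proof. by rewrite /Dsq mul_diag_mx !mxE. Qed.

Lemma dot_Dsq z v : dot (Dsq z *m v) v = Wq z v.
Proof. by apply: eq_bigr => i _; rewrite Dsq_mul expr2 expr2; ring. Qed.

Lemma hess_dot (A : 'M[R]_n) b z v :
  rhess A b z v = dot (A *m v) v + 6 * b * Wq z v - two_lambda A b z * dot v v.
Proof.
rewrite /rhess quad_mx mulmxBl mulmxDl -scalemxAl mul_scalar_mx.
by rewrite dotBl dotDl !dotZl dot_Dsq -mulrA.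
Qed.

Lemma grad_eq (A : 'M[R]_n) b z :
  rgrad A b z = A *m z + (2 * b) *: (Dsq z *m z) - two_lambda A b z *: z.
Proof. by rewrite /rgrad mulmxDl -scalemxAl. Qed.

Lemma tl_eq (A : 'M[R]_n) b z :
  two_lambda A b z = dot (A *m z) z + 2 * b * dot (Dsq z *m z) z.
Proof.
rewrite /two_lambda quad_mx; congr (_ + _ * _).
by apply: eq_bigr => i _; rewrite Dsq_mul; ring.
Qed.

Lemma Wq_scale z v k : Wq z (k *: v) = k ^+ 2 * Wq z v.
Proof. rewrite /Wq mulr_sumr; apply: eq_bigr => i _; rewrite mxE; ring. Qed.

Lemma Wq_ge0 z v : 0 <= Wq z v.
Proof. by apply: sumr_ge0 => i _; rewrite mulr_ge0 // sqr_ge0. Qed.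

Lemma entry_le1 z i : dot z z = 1 -> z i 0 ^+ 2 <= 1.
Proof.
move=> <-; rewrite /dot (bigD1 i) //= expr2 lerDl.
by apply: sumr_ge0 => j _; rewrite -expr2 sqr_ge0.
Qed.

Lemma orth_quartic z p : dot z z = 1 -> dot z p = 0 -> 2 * Wq z p <= dot p p.
Proof.
move=> zz zp.
have e : \sum_k \sum_l (z k 0 * p l 0 + z l 0 * p k 0) ^+ 2 = 2 * dot p p.
  have -> : \sum_k \sum_l (z k 0 * p l 0 + z l 0 * p k 0) ^+ 2 =
     \sum_k \sum_l ((z k 0 * z k 0) * (p l 0 * p l 0) + (z l 0 * z l 0) * (p k 0 * p k 0)
        + 2 * ((z k 0 * p k 0) * (z l 0 * p l 0))).
    by apply: eq_bigr => k _; apply: eq_bigr => l _; ring.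
  under eq_bigr do rewrite big_split /= big_split /= -!mulr_sumr.
  rewrite big_split /= big_split /= -!mulr_suml.
  have h2 : \sum_(i < n) \sum_(i0 < n) z i0 0 * z i0 0 * (p i 0 * p i 0) = dot z z * dot p p.
    by rewrite /dot mulr_sumr; apply: eq_bigr => i _; rewrite mulr_suml.
  have h3 : \sum_(i < n) 2 * (z i 0 * p i 0 * \sum_(i0 < n) z i0 0 * p i0 0) = 2 * (dot z p * dot z p).
    by rewrite -mulr_sumr -mulr_suml.
  rewrite h2 h3; change (dot z z * dot p p + dot z z * dot p p + 2 * (dot z p * dot z p) = 2 * dot p p).
  rewrite zz zp; ring.
have : \sum_k (z k 0 * p k 0 + z k 0 * p k 0) ^+ 2 <=
        \sum_k \sum_l (z k 0 * p l 0 + z l 0 * p k 0) ^+ 2.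
  apply: ler_sum => k _; rewrite (bigD1 k) //= lerDl.
  by apply: sumr_ge0 => l _; rewrite sqr_ge0.
rewrite e.
have -> : \sum_k (z k 0 * p k 0 + z k 0 * p k 0) ^+ 2 = 4 * Wq z p.
  by rewrite /Wq mulr_sumr; apply: eq_bigr => k _; ring.
lra.
Qed.

End Link.

Lemma eigvec (R : realType) n (A : 'M[R]_n) (lam : nat -> R) :
  (2 <= n)%N -> A^T = A -> char_poly A = \prod_(i < n) ('X - (lam i)%:P) ->
  exists u : 'cV[R]_n, dot u u = 1 /\ A *m u = lam n.-1 *: u.
Proof.
move=> n2 Asym Achar.
have rootL : root (char_poly A) (lam n.-1).
  rewrite Achar; apply/rootP; rewrite horner_prod; apply/eqP; rewrite prodf_seq_eq0.
  have hn : (n.-1 < n)%N by lia.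
  apply/hasP; exists (Ordinal hn); first by rewrite mem_index_enum.
  by rewrite /= hornerXsubC subrr eqxx.
have /eigenvalueP [v vA v0] : eigenvalue A (lam n.-1) by rewrite eigenvalue_root_char.
set u0 := v^T.
have Au0 : A *m u0 = lam n.-1 *: u0.
  by rewrite /u0 -{1}Asym -trmx_mul vA linearZ.
have u00 : u0 != 0 by apply: contra v0 => /eqP h; rewrite -[v]trmxK -/u0 h trmx0.
have dpos : 0 < dot u0 u0.
  rewrite lt_def dot_ge0 andbT; apply: contra u00 => /eqP h; apply/eqP; exact: dot_eq0.
set s := Num.sqrt (dot u0 u0).
have spos : 0 < s by rewrite sqrtr_gt0.
exists (s^-1 *: u0); split.
  rewrite dotZl dotZr mulrA -expr2 -/(s ^+ 2) -[X in _ * X](sqr_sqrtr (ltW dpos)) -/s.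
  by rewrite -exprMn mulVf ?expr1n // gt_eqF.
by rewrite -scalemxAr Au0 !scalerA mulrC.
Qed.

Lemma abs_le_sq (R : realType) (x y : R) : 0 <= y -> x ^+ 2 <= y ^+ 2 -> `|x| <= y.
Proof.
move=> y0 h; case: (lerP 0 x) => hx; [rewrite ger0_norm // | rewrite ltr0_norm //]; nra.
Qed.

Lemma sq_le_abs (R : realType) (x y : R) : `|x| <= y -> x ^+ 2 <= y ^+ 2.
Proof.
move=> h; case: (lerP 0 x) => hx; [move: h; rewrite ger0_norm // | move: h; rewrite ltr0_norm //]; nra.
Qed.

Arguments sq_le_abs {R x y}.
Arguments abs_le_sq {R x y}.


Unset Implicit Arguments. Set Strict Implicit. Set Printing Implicit Defensive.

Theorem theorem14 (R : realType) (n : nat) (A : 'M[R]_n) (lam : nat -> R)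
    (gamma beta : R) :
  (2 <= n)%N ->
  A^T = A ->
  (* lam 0 >= lam 1 >= ... >= lam (n-1) are the eigenvalues of A, with multiplicity *)
  char_poly A = \prod_(i < n) ('X - (lam i)%:P) ->
  (forall i j : nat, (i <= j < n)%N -> lam j <= lam i) ->
  let rho := lam 0%N - lam n.-1 in
  let delta := lam n.-2 - lam n.-1 in
  0 < delta ->
  0 < gamma ->
  0 < beta ->
  beta <= delta / (2 * (7%:R / 3%:R + gamma) + (2%:R / 3%:R + gamma) * (rho / delta)) ->
  strict_saddle A beta (gamma * beta) (gamma * beta) (gamma * beta).
Proof.
move=> n2 Asym Achar srt rho delta hd hg hb hbeta.
have hD : (16 / 3 + 3 * gamma) * beta <= delta.
  have rd : delta <= rho.
    rewrite /rho /delta lerD2r; apply: srt; lia.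
  have t1 : 1 <= rho / delta by rewrite ler_pdivlMr // mul1r.
  set t := rho / delta in hbeta t1.
  have den : 16 / 3 + 3 * gamma <= 2 * (7%:R / 3%:R + gamma) + (2%:R / 3%:R + gamma) * t.
    nra.
  have den0 : 0 < 2 * (7%:R / 3%:R + gamma) + (2%:R / 3%:R + gamma) * t by nra.
  move: hbeta; rewrite ler_pdivlMr // => hb2.
  nra.
have gap : lam n.-1 < lam n.-2 by rewrite -subr_gt0.
have [r1 [r2 [r12 Hs]]] := spec_final Asym Achar n2 srt gap.
have [u [uu Au]] := @eigvec R n A lam n2 Asym Achar.
have S2 := S2_from Asym gap uu Au r12 Hs.
rewrite -/delta in S2.
set L := lam n.-1 in S2 Au.
move=> z /sphere_dot zz.
set a := dot u z.
set qz := dot (A *m z) z.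
set E := qz - L.
set s2 := 1 - a ^+ 2.
set c := Dsq z *m z.
set s4 := dot c z.
set tl := two_lambda A beta z.
have tlE : tl = qz + 2 * beta * s4 by rewrite /tl tl_eq.
set p := u - a *: z.
have pz : dot p z = 0 by rewrite /p dotBl dotZl zz mulr1 subrr.
have pp : dot p p = s2.
  rewrite /p !(dotBl, dotBr, dotZl, dotZr) uu zz (dotC z u) -/a /s2; ring.
have s2ge : 0 <= s2 by rewrite -pp dot_ge0.
have Azu : dot (A *m z) u = L * a.
  by rewrite dot_mulmx Asym Au dotZr (dotC z u).
have qp : dot (A *m p) p = L * (1 - 2 * a ^+ 2) + a ^+ 2 * qz.
  rewrite /p mulmxBr -scalemxAr Au !(dotBl, dotBr, dotZl, dotZr) uu -/a -/qz Azu; ring.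
have hE : delta * s2 <= E.
  have := S2 z; rewrite zz -/qz -/a; rewrite /E /s2; lra.
have zi1 : forall i, z i 0 ^+ 2 <= 1 by move=> i; apply: entry_le1.
have s4E : s4 = \sum_i z i 0 ^+ 4.
  by rewrite /s4 /dot; apply: eq_bigr => i _; rewrite Dsq_mul; ring.
have s4ge : 0 <= s4 .
  rewrite s4E; apply: sumr_ge0 => i _; have -> : z i 0 ^+ 4 = (z i 0 ^+ 2) ^+ 2 by ring. 
  exact: sqr_ge0.
have s4le : s4 <= 1.
  rewrite s4E -zz /dot; apply: ler_sum => i _.
  have := zi1 i; have := sqr_ge0 (z i 0); rewrite -expr2; nra.
have cpb : dot c p ^+ 2 <= s2 / 4.
  set h := c - (1/2) *: z.
  have e1 : dot h p = dot c p by rewrite /h dotBl dotZl (dotC z p) pz mulr0 subr0.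
  have cc : dot c c <= s4.
    rewrite s4E /dot; apply: ler_sum => i _; rewrite !Dsq_mul.
    have := zi1 i; have := sqr_ge0 (z i 0); set w := z i 0 ^+ 2 => h1 h2.
    have -> : z i 0 ^+ 2 * z i 0 * (z i 0 ^+ 2 * z i 0) = w ^+ 3 by rewrite /w; ring.
    have -> : z i 0 ^+ 4 = w ^+ 2 by rewrite /w; ring.
    nra.
  have e2 : dot h h = dot c c - s4 + 1 / 4.
    by rewrite /h !(dotBl, dotBr, dotZl, dotZr) zz (dotC z c) -/s4; field.
  have := CS h p; rewrite e1 e2 pp => h1.
  have : (dot c c - s4 + 1 / 4) * s2 <= 1 / 4 * s2 by apply: ler_wpM2r => //; lra.
  lra.
have Wp : 2 * Wq z p <= s2 by rewrite -pp; apply: orth_quartic => //; rewrite dotC.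
set g := rgrad A beta z.
have gp : dot g p = - (a * E) + 2 * beta * dot c p.
  rewrite /g grad_eq !(dotBl, dotDl, dotZl) (dotC z p) pz mulr0 subr0 -/c.
  rewrite /p dotBr dotZr Azu -/qz /E; ring.
set Hp := dot (A *m p) p + 6 * beta * Wq z p - tl * s2.
have HpE : Hp <= - ((2 * s2 - 1) * E) + 3 * beta * s2.
  rewrite /Hp qp tlE /E.
  have a2 : a ^+ 2 = 1 - s2 by rewrite /s2; ring.
  rewrite a2.
  have : 0 <= beta * s4 * s2 by rewrite mulr_ge0 // mulr_ge0 // ltW.
  have : 6 * beta * Wq z p <= 3 * beta * s2 by nra.
  nra.
case: (lerP (gamma * beta) (vnorm g)) => hgn; first by right; left.
have gb0 : 0 < gamma * beta by rewrite mulr_gt0.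
have gg : dot g g <= (gamma * beta) ^+ 2.
  have e : dot g g = vnorm g ^+ 2 by rewrite vnorm_dot sqr_sqrtr // dot_ge0.
  rewrite e; have : 0 <= vnorm g by rewrite vnorm_dot sqrtr_ge0.
  have h1 := ltW hgn; nra.
have gpb : dot g p ^+ 2 <= (gamma * beta) ^+ 2 * s2.
  have := CS g p; rewrite pp => h; apply: le_trans h _; apply: ler_wpM2r => //.
set r := Num.sqrt s2.
have r0 : 0 <= r by apply: sqrtr_ge0.
have rr : r ^+ 2 = s2 by apply: sqr_sqrtr.
have hG : (1 - s2) * E ^+ 2 <= (1 + gamma) ^+ 2 * beta ^+ 2 * s2.
  have a2 : a ^+ 2 = 1 - s2 by rewrite /s2; ring.
  have X1 : `|dot g p| <= gamma * beta * r.
    apply: abs_le_sq; first by rewrite mulr_ge0 // ltW.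
    by rewrite exprMn rr.
  have X2 : `|dot c p| <= r / 2.
    apply: abs_le_sq; first by rewrite divr_ge0.
    rewrite expr_div_n rr; lra.
  have X3 : `|a * E| <= (1 + gamma) * beta * r.
    have -> : a * E = - (dot g p) + 2 * beta * dot c p by rewrite gp; ring.
    apply: le_trans (ler_normD _ _) _; rewrite normrN normrM (@ger0_norm _ (2 * beta)); last by rewrite mulr_ge0 // ltW.
    nra.
  have := sq_le_abs X3; rewrite -a2 !exprMn rr => h; apply: le_trans h; lra.
have LEFT : (2 * s2 - 1) * E <= (3 + gamma) * beta * s2 ->
    forall v, tangent z v -> on_sphere v -> gamma * beta <= rhess A beta z v.
  move=> hH v /tangent_dot vz /sphere_dot vv.
  rewrite hess_dot -/tl vv mulr1 tlE.
  have qv := S2 v; rewrite vv in qv.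
  have uv : dot u v ^+ 2 <= s2.
    have -> : dot u v = dot p v by rewrite /p dotBl dotZl (dotC z v) vz mulr0 subr0.
    by have := CS p v; rewrite pp vv mulr1.
  have W0 := Wq_ge0 z v.
  have fa := @final_alg R E s2 delta beta gamma s2ge hE hH hG hD hb hg.
  have : beta * s4 <= beta by nra.
  have : 0 <= beta * Wq z v by rewrite mulr_ge0 // ltW.
  have : delta * (1 - s2) <= delta * (1 - dot u v ^+ 2) by apply: ler_wpM2l; [exact: ltW | lra].
  rewrite /E in fa; lra.
case: (ltrP 0 s2) => s2p; last first.
  have s20 : s2 = 0 by apply/le_anti; rewrite s2p s2ge.
  left; apply: LEFT; rewrite s20; move: hE; rewrite s20; nra.
case: (lerP Hp (- (gamma * beta) * s2)) => hHp; last first.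
  by left; apply: LEFT; nra.
right; right.
have rp : 0 < r by rewrite sqrtr_gt0.
have rn0 : r != 0 by rewrite gt_eqF.
exists (r^-1 *: p); split; first by apply/tangent_dot; rewrite dotZl pz mulr0.
split.
  apply/sphere_dot; rewrite dotZl dotZr pp -rr; field.
  exact: rn0.
have e : rhess A beta z (r^-1 *: p) = Hp / r ^+ 2.
  rewrite hess_dot -scalemxAr dotZl dotZr dotZl dotZr Wq_scale pp -/tl /Hp -rr.
  field.
  exact: rn0.
rewrite e ler_pdivrMr ?exprn_gt0 // rr; lra.
Qed.
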